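(* Let $F_{\mathcal P}$ be a function determined by Algorithm 1 for a path $\mathcal P$. Then for every configuration $\vec i$ on $\mathrm{Conn}(\mathcal P)$ and every plaquette $p\in\mathcal B_{\mathcal P}$, $F_{\mathcal P}(\vec i\oplus\vec\alpha^p)=\frac{b_p(\vec i\oplus\vec\alpha^{\mathcal P})}{b_p(\vec i)}F_{\mathcal P}(\vec i)$; equivalently $S^+_{\mathcal P}=X_{\mathcal P}\sum_{\vec i}F_{\mathcal P}(\vec i)|\vec i\rangle\langle\vec i|$ commutes with every $B_p$.
   Context: Let $\Lambda$ be a hexagonal (honeycomb) lattice embedded in a closed orientable surface, with one qubit on each edge. For an edge $j$, $\sigma^x_j,\sigma^z_j$ denote the Pauli operators on qubit $j$ and $n^{\pm}_j=\tfrac12(1\pm\sigma^z_j)$. A (string) configuration $\vec i$ is a computational basis state, viewed as a bit string assigning $0$ (empty) or $1$ (occupied) to each edge; $\vec i\oplus\vec\alpha$ is bitwise addition mod 2. For a hexagonal plaquette $p$, label its boundary edges $1,\dots,6$ cyclically (index $0$ means $6$) and its outgoing edges so that edge $12$ meets edges $6,1$; edge $7$ meets $1,2$; edge $8$ meets $2,3$; edge $9$ meets $3,4$; edge $10$ meets $4,5$; edge $11$ meets $5,6$. Define $B_p=\Big(\prod_{j=1}^6\sigma^x_j\Big)\Big(\prod_{j=1}^6(-1)^{n^-_{j-1}n^+_j}\Big)\,i^{n^-_{12}(n^-_1n^-_6-n^+_1n^+_6)}\,i^{n^-_7(n^+_1n^+_2-n^-_1n^-_2)}\,i^{n^+_8(n^-_2n^+_3-n^+_2n^-_3)}\,i^{n^-_9(n^-_3n^-_4-n^+_3n^+_4)}\,i^{n^-_{10}(n^+_4n^+_5-n^-_4n^-_5)}\,i^{n^+_{11}(n^-_5n^+_6-n^+_5n^-_6)}$;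 all $B_p$ commute pairwise and square to the identity. Write $B_p=\prod_{j\in\partial p}\sigma^x_j\sum_{\vec i}b_p(\vec i)|\vec i\rangle\langle\vec i|$, defining the phase $b_p(\vec i)$. Let $\vec\alpha^p$ be the configuration occupied exactly on the boundary edges of $p$. A path $\mathcal P$ is a sequence of edges forming a walk; $\vec\alpha^{\mathcal P}$ is the mod-2 sum of the indicators of its edges and $X_{\mathcal P}$ the product of $\sigma^x$ over its edges. $\mathrm{Conn}(\mathcal P)$ is the set of edges of $\mathcal P$ together with all edges sharing a vertex with an edge of $\mathcal P$; $\mathcal B_{\mathcal P}$ is the set of plaquettes with at least one boundary edge in $\mathrm{Conn}(\mathcal P)$. Define $\theta_{\mathcal P}(\vec i,p_1,\dots,p_m)=\prod_{k=1}^m \frac{b_{p_k}(\vec i\oplus\vec\alpha^{\mathcal P}\oplus\bigoplus_{j<k}\vec\alpha^{p_j})}{b_{p_k}(\vec i\oplus\bigoplus_{j<k}\vec\alpha^{p_j})}$ (a configuration on $\mathrm{Conn}(\mathcal P)$ being extended arbitrarily to the whole lattice). The configuration class of $\vec i$ on $\mathrm{Conn}(\mathcal P)$ is $\mathcal C_{\mathcal P}(\vec i)=\{\vec i\oplus\bigoplus_{p\in S}\vec\alpha^p|_{\mathrm{Conn}(\mathcal P)}:S\subseteq\mathcal B_{\mathcal P}\}$. Algorithm 1: for each configuration class pick a representative $\vec i$, set $F_{\mathcal P}(\vec i)$ to an arbitrary unit complex number, and for every subset $\{p_1,\dots,p_m\}\subseteq\mathcal B_{\mathcal P}$ set $F_{\mathcal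 P}(\vec i\oplus\bigoplus_k\vec\alpha^{p_k})=\theta_{\mathcal P}(\vec i,p_1,\dots,p_m)F_{\mathcal P}(\vec i)$. *)

(* Defs.v *)
From HB Require Import structures.
From mathcomp Require Import all_boot all_order all_algebra.
Unset Printing Implicit Defensive.
Import Order.TTheory GRing.Theory Num.Theory.
Local Open Scope ring_scope.

(* A hexagonal lattice on a closed orientable surface is necessarily a torus
   (Euler characteristic 0), i.e. the plane honeycomb modulo a full-rank
   lattice of translations.  Hexagon (plaquette) centres are points of the
   triangular lattice Z^2 (axial coordinates, unit steps dir 0..5 below);
   the translation lattice is given in Hermite form by the basis
   (La+1, 0), (Lb, Lc+1).  lrot/lflip fix the (translation-invariant)
   convention of which boundary edge of a plaquette is labelled 1 and
   in which cyclic sense the labels 1..6 run; the theorem is stated for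
   every such convention. *)
Record hexlat := HexLat { La : nat; Lb : nat; Lc : nat; lrot : nat; lflip : bool }.

Definition coord := (int * int)%type.
Definition addc (u v : coord) : coord := (u.1 + v.1, u.2 + v.2).

Definition hexnorm (v : coord) : nat :=
  ((absz v.1 + absz v.2 + absz (v.1 + v.2)%R) %/ 2)%N.

(* the six unit steps, in counterclockwise order *)
Definition dir (k : nat) : coord :=
  nth (0, 0) [:: (1, 0); (0, 1); (-1, 1); (-1, 0); (0, -1); (1, -1)] (k %% 6).

Notation hex L := ('I_(La L).+1 * 'I_(Lc L).+1)%type.

Definition hexof (L : hexlat) (X : coord) : hex L :=
  let q := (X.2 %/ (Lc L).+1%:Z)%Z in
  let y := (X.2 %% (Lc L).+1%:Z)%Z in
  let x := ((X.1 - q * (Lb L)%:Z) %% (La L).+1%:Z)%Z in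
  (inord (absz x), inord (absz y)).

Definition pos (L : hexlat) (h : hex L) : coord := ((h.1 : nat)%:Z, (h.2 : nat)%:Z).

(* edges: the edge (h,k), k<3, is the edge separating hexagon h from h + dir k *)
Notation edge L := (hex L * 'I_3)%type.

Definition edge_of (L : hexlat) (X : coord) (k : nat) : edge L :=
  let k' := (k %% 6)%N in
  if (k' < 3)%N then (hexof L X, inord k')
  else (hexof L (addc X (dir k')), inord (k' - 3)).

(* vertices: (g,true) is the vertex common to hexagons g, g+dir 0, g+dir 1;
   (g,false) the vertex common to g, g+dir 0, g+dir 5. *)
Notation vert L := (hex L * bool)%type.

(* the corner of hexagon X common to X, X + dir k, X + dir (k+1) *)
Definition corner (L : hexlat) (X : coord) (k : nat) : vert L :=
  match (k %% 6)%N with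
  | 0 => (hexof L X, true)
  | 1 => (hexof L (addc X (dir 2)), false)
  | 2 => (hexof L (addc X (dir 3)), true)
  | 3 => (hexof L (addc X (dir 3)), false)
  | 4 => (hexof L (addc X (dir 4)), true)
  | _ => (hexof L X, false)
  end.

Definition ends (L : hexlat) (e : edge L) : vert L * vert L :=
  (corner L (pos L e.1) e.2, corner L (pos L e.1) (e.2 + 5)).

Definition incident (L : hexlat) (v : vert L) (e : edge L) : bool :=
  (v == (ends L e).1) || (v == (ends L e).2).

Definition shares_vertex (L : hexlat) (e e' : edge L) : bool :=
  [exists v : vert L, incident L v e && incident L v e'].

Fixpoint walk_from (L : hexlat) (v : vert L) (s : seq (edge L)) : bool :=
  match s with
  | [::] => true
  | e :: s' => incident L v e &&
      walk_from L (if v == (ends L e).1 then (ends L e).2 else (ends L e).1) s'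
  end.
Definition is_walk (L : hexlat) (s : seq (edge L)) : bool :=
  [exists v : vert L, walk_from L v s].

(* configurations: true = occupied (|1>), false = empty (|0>) *)
Notation conf L := {ffun edge L -> bool}.

Definition cxor (L : hexlat) (i j : conf L) : conf L := [ffun e => i e (+) j e].
Definition czero (L : hexlat) : conf L := [ffun => false].

Definition alpha_plaq (L : hexlat) (p : hex L) : conf L :=
  [ffun e => [exists k : 'I_6, e == edge_of L (pos L p) k]].
Definition alpha_plaqs (L : hexlat) (ps : seq (hex L)) : conf L :=
  foldr (cxor L) (czero L) [seq alpha_plaq L p | p <- ps].
Definition alpha_path (L : hexlat) (s : seq (edge L)) : conf L :=
  [ffun e => odd (count_mem e s)].

Definition Conn (L : hexlat) (s : seq (edge L)) : {set edge L} :=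
  [set e | [exists e0 : edge L, (e0 \in s) && ((e == e0) || shares_vertex L e0 e)]].
Definition BP (L : hexlat) (s : seq (edge L)) : {set hex L} :=
  [set p | [exists k : 'I_6, edge_of L (pos L p) k \in Conn L s]].

(* restriction of a configuration to a set of edges (zero outside);
   configurations on A are those with restr A i = i *)
Definition restr (L : hexlat) (A : {set edge L}) (i : conf L) : conf L :=
  [ffun e => (e \in A) && i e].

Definition cls (L : hexlat) (s : seq (edge L)) (i : conf L) : {set conf L} :=
  [set restr L (Conn L s) (cxor L i (alpha_plaqs L (enum S))) | S : {set hex L} in powerset (BP L s)].

(* labelling of the 12 edges of plaquette p (labels 1..6 boundary, 0 = 6,
   7..12 outgoing, as in the paper) *)
Definition lsgn (L : hexlat) : nat := if lflip L then 5%N else 1%N.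
Definition delta (L : hexlat) (j : nat) : nat := (lrot L + lsgn L * j)%N.
Definition nbr (L : hexlat) (p : hex L) (j : nat) : coord := addc (pos L p) (dir (delta L j)).
Definition lab (L : hexlat) (p : hex L) (j : nat) : edge L :=
  if (j <= 6)%N then edge_of L (pos L p) (delta L j)
  else edge_of L (nbr L p (j - 6)) (delta L (j - 6) + 2 * lsgn L).

(* n^-_e = 1 iff occupied, n^+_e = 1 iff empty *)
Definition nm (L : hexlat) (i : conf L) (e : edge L) : int := (i e : nat)%:Z.
Definition np (L : hexlat) (i : conf L) (e : edge L) : int := 1 - nm L i e.

Definition bph (L : hexlat) (C : numClosedFieldType) (p : hex L) (i : conf L) : C :=
  let n_ j := nm L i (lab L p j) in
  let p_ j := np L i (lab L p j) in
  (\prod_(j < 6) (-1) ^ (n_ j * p_ j.+1)) *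
  'i ^ (n_ 12%N * (n_ 1%N * n_ 6%N - p_ 1%N * p_ 6%N)) *
  'i ^ (n_ 7%N * (p_ 1%N * p_ 2%N - n_ 1%N * n_ 2%N)) *
  'i ^ (p_ 8%N * (n_ 2%N * p_ 3%N - p_ 2%N * n_ 3%N)) *
  'i ^ (n_ 9%N * (n_ 3%N * n_ 4%N - p_ 3%N * p_ 4%N)) *
  'i ^ (n_ 10%N * (p_ 4%N * p_ 5%N - n_ 4%N * n_ 5%N)) *
  'i ^ (p_ 11%N * (n_ 5%N * p_ 6%N - p_ 5%N * n_ 6%N)).

Definition theta (L : hexlat) (C : numClosedFieldType) (s : seq (edge L))
    (i : conf L) (ps : seq (hex L)) : C :=
  \prod_(k < size ps)
    (bph L C (nth (ord0, ord0) ps k)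
        (cxor L (cxor L i (alpha_path L s)) (alpha_plaqs L (take k ps))) /
     bph L C (nth (ord0, ord0) ps k) (cxor L i (alpha_plaqs L (take k ps)))).

(* Main.v *)
Require Import Defs.
From HB Require Import structures.
From mathcomp Require Import all_boot all_order all_algebra.
From mathcomp Require Import ring lra zify.
Import Order.TTheory GRing.Theory Num.Theory.
Local Open Scope ring_scope.
Set Warnings "-notation-overridden -ambiguous-paths".

Section Lat.
Variable L : hexlat.
Let a : int := (La L).+1%:Z.
Let b : int := (Lb L)%:Z.
Let c : int := (Lc L).+1%:Z.

Lemma a_neq0 : a != 0. Proof. by []. Qed.
Lemma c_neq0 : c != 0. Proof. by []. Qed.

Lemma hexof_decomp X : exists k q : int,
  X = addc (pos L (hexof L X)) (k * a + q * b, q * c).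
Proof.
rewrite /hexof /pos /=.
set q := (X.2 %/ c)%Z.
set x := ((X.1 - q * b) %% a)%Z.
set y := (X.2 %% c)%Z.
have x0 : 0 <= x by apply: modz_ge0.
have xa : x < a by apply: ltz_pmod.
have y0 : 0 <= y by apply: modz_ge0.
have yc : y < c by apply: ltz_pmod.
have -> : ((inord `|x|%N : 'I_(La L).+1) : nat)%:Z = x.
  rewrite inordK ?gez0_abs //.
  by rewrite -ltz_nat gez0_abs.
have -> : ((inord `|y|%N : 'I_(Lc L).+1) : nat)%:Z = y.
  rewrite inordK ?gez0_abs //.
  by rewrite -ltz_nat gez0_abs.
exists ((X.1 - q * b) %/ a)%Z, q.
set k := ((X.1 - q * b) %/ a)%Z.
have H := divz_eq (X.1 - q * b) a.
have H2 := divz_eq X.2 c.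
rewrite -/x -/k in H; rewrite -/q -/y in H2.
clearbody x y k q.
rewrite /addc; apply: injective_projections => /=.
  by rewrite -(subrK (q * b) X.1) H; ring.
by rewrite {1}H2; ring.
Qed.

Lemma hexof_shift X m n :
  hexof L (addc X (m * a + n * b, n * c)) = hexof L X.
Proof.
rewrite /hexof /addc /=.
have -> : ((X.2 + n * c) %/ c)%Z = n + (X.2 %/ c)%Z.
  by rewrite addrC divzMDl.
have -> : ((X.2 + n * c) %% c)%Z = (X.2 %% c)%Z.
  by rewrite addrC modzMDl.
congr (inord `|_|, _).
rewrite -/c -/b.
have -> : X.1 + (m * a + n * b) - (n + (X.2 %/ c)%Z) * b
   = m * a + (X.1 - (X.2 %/ c)%Z * b) by ring.
by rewrite modzMDl.
Qed.

Lemma addc0 X : addc X (0, 0) = X.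
Proof. by case: X => x y; rewrite /addc /= !addr0. Qed.

Lemma addcA X u v : addc (addc X u) v = addc X (addc u v).
Proof. by rewrite /addc /= !addrA. Qed.

Lemma hexof_pos X v : hexof L (addc (pos L (hexof L X)) v) = hexof L (addc X v).
Proof.
have [k [q E]] := hexof_decomp X.
rewrite [in RHS]E addcA.
have -> : addc (k * a + q * b, q * c) v = addc v (k * a + q * b, q * c).
  by rewrite /addc /= [_ + v.1]addrC [_ + v.2]addrC.
by rewrite -addcA hexof_shift.
Qed.

Definition subc (u v : Defs.coord) : Defs.coord := (u.1 - v.1, u.2 - v.2).

Lemma hexof_eq X Y : hexof L X = hexof L Y ->
  exists m n : int, subc X Y = (m * a + n * b, n * c).
Proof.
have [k1 [q1 E1]] := hexof_decomp X.
have [k2 [q2 E2]] := hexof_decomp Y.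
move=> H; rewrite E1 E2 H.
exists (k1 - k2), (q1 - q2).
rewrite /subc /addc /=; congr (_, _); ring.
Qed.

Lemma corner_eqmod X k k' : (k %% 6 = k' %% 6)%N -> corner L X k = corner L X k'.
Proof. by rewrite /corner => ->. Qed.

Lemma dir_eqmod k k' : (k %% 6 = k' %% 6)%N -> dir k = dir k'.
Proof. by rewrite /dir => ->. Qed.

Lemma corner_shift1 X k : corner L X k = corner L (addc X (dir k)) (k + 2).
Proof.
rewrite (corner_eqmod _ (k + 2) (k %% 6 + 2)); last by rewrite modnDml.
rewrite (dir_eqmod k (k %% 6)) ?modn_mod // (corner_eqmod X k (k %% 6)) ?modn_mod //.
have : (k %% 6 < 6)%N by rewrite ltn_mod.
move: (k %% 6)%N => t.
case: t => [|[|[|[|[|[|t]]]]]] // _; rewrite /corner /dir /= ?addcA /=.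
all: try by rewrite addc0.
all: by [].
Qed.

Lemma corner_shift2 X k : corner L X k = corner L (addc X (dir (k + 1))) (k + 4).
Proof.
rewrite (corner_eqmod _ (k + 4) (k %% 6 + 4)); last by rewrite modnDml.
rewrite (dir_eqmod (k + 1) (k %% 6 + 1)); last by rewrite modnDml.
rewrite (corner_eqmod X k (k %% 6)) ?modn_mod //.
have : (k %% 6 < 6)%N by rewrite ltn_mod.
move: (k %% 6)%N => t.
case: t => [|[|[|[|[|[|t]]]]]] // _; rewrite /corner /dir /= ?addcA /=.
all: try by rewrite addc0.
all: by [].
Qed.

Lemma corner_pos X k : corner L (pos L (hexof L X)) k = corner L X k.
Proof.
rewrite /corner; case: (k %% 6)%N => [|[|[|[|[|?]]]]]; rewrite ?hexof_pos //.
all: by rewrite -[pos L _]addc0 hexof_pos addc0.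
Qed.

Lemma incident_edge_of v X k : incident L v (edge_of L X k) =
  (v == corner L X k) || (v == corner L X (k + 5)).
Proof.
rewrite /incident /ends /edge_of.
have kt : (k %% 6 < 6)%N by rewrite ltn_mod.
case: ifP => H /=.
  rewrite !corner_pos inordK //.
  rewrite (corner_eqmod X (k %% 6) k) ?modn_mod //.
  by rewrite (corner_eqmod X (k %% 6 + 5) (k + 5)) // modnDml.
rewrite !corner_pos inordK; last by lia.
rewrite (corner_eqmod _ (k %% 6 - 3 + 5) (k %% 6 + 2)); last by congr (_ %% _)%N; lia.
rewrite -corner_shift1 (corner_eqmod X (k %% 6) k) ?modn_mod // orbC.
rewrite (corner_shift2 X (k + 5)) (dir_eqmod (k + 5 + 1) (k %% 6)); last by lia.
by rewrite (corner_eqmod _ (k + 5 + 4) (k %% 6 - 3)) //; lia.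
Qed.

Lemma term_vertex X d :
  let v := corner L X (d + (if lflip L then 5 else 0)) in
  [&& incident L v (edge_of L X d), incident L v (edge_of L X (d + lsgn L))
    & incident L v (edge_of L (addc X (dir d)) (d + 2 * lsgn L))].
Proof.
rewrite /lsgn; case: (lflip L) => /=; rewrite !incident_edge_of.
  rewrite eqxx orbT /=.
  rewrite (corner_shift2 X (d + 5)) (dir_eqmod (d + 5 + 1) d); last by lia.
  rewrite (corner_eqmod _ (d + 5 + 4) (d + 2 * 5 + 5)); last by lia.
  by rewrite eqxx orbT.
rewrite addn0 eqxx /=.
rewrite (corner_eqmod X (d + 1 + 5) d); last by lia.
by rewrite eqxx orbT (corner_shift1 X d) muln1 eqxx.
Qed.
End Lat.

Definition ebase (k : nat) : Defs.coord := if (k %% 6 < 3)%N then (0, 0) else dir (k %% 6).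
Definition eidx (k : nat) : nat := if (k %% 6 < 3)%N then (k %% 6)%N else (k %% 6 - 3)%N.

Lemma edge_of_form L X k : edge_of L X k = (hexof L (addc X (ebase k)), inord (eidx k)).
Proof. by rewrite /edge_of /ebase /eidx; case: ifP; rewrite ?addc0. Qed.

Definition chk (t : nat) (fl : bool) (k : nat) : bool :=
  let s := if fl then 5%N else 1%N in
  let w1 := addc (dir t) (ebase (t + 2 * s)) in
  let w2 := ebase k in
  (eidx (t + 2 * s) != eidx k) || ((w1 != w2) && (hexnorm (subc w1 w2) < 3)%N).

Lemma chk_all : all (fun t => all (fun k => chk t true k && chk t false k) (iota 0 6)) (iota 0 6).
Proof. by vm_compute. Qed.


Lemma ebase_eqmod k k' : (k %% 6 = k' %% 6)%N -> ebase k = ebase k'.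
Proof. by rewrite /ebase => ->. Qed.
Lemma eidx_eqmod k k' : (k %% 6 = k' %% 6)%N -> eidx k = eidx k'.
Proof. by rewrite /eidx => ->. Qed.
Lemma eidx_lt k : (eidx k < 3)%N.
Proof. rewrite /eidx; case: ifP => //; have := ltn_mod k 6; lia. Qed.

Lemma outer_not_boundary (L : hexlat)
  (Hlat : forall m n : int, (m, n) != (0, 0) ->
     leq 3 (hexnorm (m * (La L).+1%:Z + n * (Lb L)%:Z, n * (Lc L).+1%:Z)))
  X d k : edge_of L (addc X (dir d)) (d + 2 * lsgn L) != edge_of L X k.
Proof.
have Hc := chk_all.
set t := (d %% 6)%N; set k' := (k %% 6)%N.
have tl : (t < 6)%N by rewrite ltn_mod.
have kl : (k' < 6)%N by rewrite ltn_mod.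
have Hck : chk t (lflip L) k'.
  have ti : t \in iota 0 6 by rewrite mem_iota.
  have ki : k' \in iota 0 6 by rewrite mem_iota.
  have /allP H1 := allP Hc t ti.
  have /andP [] := H1 k' ki.
  by case: (lflip L).
rewrite !edge_of_form addcA.
rewrite (dir_eqmod d t) ?modn_mod // (ebase_eqmod (d + 2 * lsgn L) (t + 2 * lsgn L)); last by rewrite modnDml.
rewrite (eidx_eqmod (d + 2 * lsgn L) (t + 2 * lsgn L)); last by rewrite modnDml.
rewrite (ebase_eqmod k k') ?modn_mod // (eidx_eqmod k k') ?modn_mod //.
move: Hck; rewrite /chk -[if lflip L then _ else _]/(lsgn L).
set w1 := addc _ _; set w2 := ebase k'.
move: (eidx_lt (t + 2 * lsgn L)) (eidx_lt k').
move=> l1 l2 HH; apply/negP => /eqP E0.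
have Eh : hexof L (addc X w1) = hexof L (addc X w2) := f_equal fst E0.
have Ei : (inord (eidx (t + 2 * lsgn L)) : 'I_3) = inord (eidx k') := f_equal snd E0.
case/orP: HH => [Hi | /andP [Hw Hn]].
  by move: Hi; rewrite -(inordK l1) -(inordK l2) Ei eqxx.
have [m [n E]] := @hexof_eq L _ _ Eh.
have E' : subc (addc X w1) (addc X w2) = subc w1 w2 by rewrite /subc /addc /=; congr (_, _); ring.
rewrite E' in E.
case: (eqVneq (m, n) (0, 0)) => [[Em En] | Hmn].
  rewrite Em En in E.
  move: Hw E; rewrite !mul0r addr0 /subc; clearbody w1 w2; clear E0 Eh E' Hn.
  case: w1 => ? ?; case: w2 => ? ? /= Hw [].
  by move/eqP; rewrite subr_eq0 => /eqP h1 /eqP; rewrite subr_eq0 => /eqP h2; rewrite h1 h2 eqxx in Hw.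
by move: (Hlat m n Hmn); rewrite -E; lia.
Qed.


Definition Bform (C : numClosedFieldType) (n : nat -> int) : C :=
  let n_ j := n j in
  let p_ j := 1 - n j in
  (\prod_(j < 6) (-1) ^ (n_ j * p_ j.+1)) *
  'i ^ (n_ 12%N * (n_ 1%N * n_ 6%N - p_ 1%N * p_ 6%N)) *
  'i ^ (n_ 7%N * (p_ 1%N * p_ 2%N - n_ 1%N * n_ 2%N)) *
  'i ^ (p_ 8%N * (n_ 2%N * p_ 3%N - p_ 2%N * n_ 3%N)) *
  'i ^ (n_ 9%N * (n_ 3%N * n_ 4%N - p_ 3%N * p_ 4%N)) *
  'i ^ (n_ 10%N * (p_ 4%N * p_ 5%N - n_ 4%N * n_ 5%N)) *
  'i ^ (p_ 11%N * (n_ 5%N * p_ 6%N - p_ 5%N * n_ 6%N)).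

Lemma bph_Bform L C p i : bph L C p i = Bform C (fun j => nm L i (lab L p j)).
Proof. by []. Qed.

Lemma Bsq (C : numClosedFieldType) (n n' : nat -> int) :
  (forall j, (j <= 6)%N -> n' j = 1 - n j) -> (forall j, (7 <= j)%N -> n' j = n j) ->
  n 0%N = n 6%N -> Bform C n * Bform C n' = 1.
Proof.
move=> H1 H2 H0.
have i0 : ('i : C) != 0 by rewrite neq0Ci.
have m1 : (-1 : C) = 'i ^ (2%:Z) by rewrite -sqrCi.
rewrite /Bform !big_ord_recr !big_ord0 /= !mul1r m1 !exprz_exp.
rewrite -!expfzDr //.
rewrite (H1 0%N) // (H1 1%N) // (H1 2%N) // (H1 3%N) // (H1 4%N) // (H1 5%N) // (H1 6%N) // (H2 7%N) // (H2 8%N) // (H2 9%N) // (H2 10%N) // (H2 11%N) // (H2 12%N) // H0.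
set K := (n 1%N + n 2%N + n 3%N + n 4%N + n 5%N + n 6%N - (n 6%N * n 1%N + n 1%N * n 2%N + n 2%N * n 3%N + n 3%N * n 4%N + n 4%N * n 5%N + n 5%N * n 6%N)).
have i4 : ('i : C) ^ (4%:Z) = 1.
  by change ('i ^+ (2 * 2) = 1 :> C); rewrite exprM sqrCi expr2 mulrN1 opprK.

match goal with |- _ ^ ?E = _ => have -> : E = 4%:Z * K end.
  rewrite /K; ring.
by rewrite -exprz_exp i4 exp1rz.
Qed.


Lemma edge_of_eqmod L X k k' : (k %% 6 = k' %% 6)%N -> edge_of L X k = edge_of L X k'.
Proof. by rewrite /edge_of => ->. Qed.

Lemma deltaS L j : delta L j.+1 = (delta L j + lsgn L)%N.
Proof. by rewrite /delta mulnS; lia. Qed.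

Lemma lab_vertex L p j : (0 < j <= 6)%N ->
  let v := corner L (pos L p) (delta L j + (if lflip L then 5 else 0)) in
  [&& incident L v (lab L p j), incident L v (edge_of L (pos L p) (delta L j + lsgn L))
    & incident L v (lab L p (6 + j))].
Proof.
move=> /andP [j0 j6] /=.
have := term_vertex L (pos L p) (delta L j).
rewrite /lab j6 (_ : (6 + j <= 6)%N = false); last by lia.
by rewrite (_ : (6 + j - 6 = j)%N) //; lia.
Qed.

Definition common3 L (e1 e2 e3 : edge L) :=
  exists v, [&& incident L v e1, incident L v e2 & incident L v e3].

Lemma common_pair L p j : (j < 6)%N -> common3 L (lab L p j) (lab L p j.+1) (lab L p j.+1).
Proof.
move=> jl.
have H1 : forall k, (k <= 6)%N -> lab L p k = edge_of L (pos L p) (delta L k).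
  by move=> k kl; rewrite /lab kl.
have m6 : forall k k', (k %% 6 = k' %% 6)%N ->
   edge_of L (pos L p) k = edge_of L (pos L p) k' by move=> *; exact: edge_of_eqmod.
case: j jl => [|j] jl.
  have /and3P [A B _] := lab_vertex L p 6 isT.
  exists (corner L (pos L p) (delta L 6 + (if lflip L then 5 else 0))); apply/and3P.
  have E1 : lab L p 1 = edge_of L (pos L p) (delta L 6 + lsgn L).
    rewrite H1 //; apply: m6; rewrite /delta /lsgn; case: (lflip L); lia.
  have E0 : lab L p 0 = lab L p 6.
    rewrite !H1 //; apply: m6; rewrite /delta /lsgn; case: (lflip L); lia.
  by rewrite E1 E0.
have Hj : (0 < j.+1 <= 6)%N by lia.
have /and3P [A B _] := lab_vertex L p j.+1 Hj.
have E : lab L p j.+2 = edge_of L (pos L p) (delta L j.+1 + lsgn L).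
  rewrite H1; [by rewrite deltaS | lia].
by eexists; apply/and3P; split; [exact: A | rewrite E; exact: B | rewrite E; exact: B].
Qed.

Lemma common_outer L p j : (0 < j < 6)%N ->
  common3 L (lab L p (6 + j)) (lab L p j) (lab L p j.+1).
Proof.
move=> Hj.
have Hj' : (0 < j <= 6)%N by lia.
have /and3P [A B D] := lab_vertex L p j Hj'.
have E : lab L p j.+1 = edge_of L (pos L p) (delta L j + lsgn L).
  rewrite /lab (_ : (j.+1 <= 6)%N = true) ?deltaS //; lia.
by eexists; apply/and3P; split; [exact: D | exact: A | rewrite E; exact: B].
Qed.

Lemma common_outer6 L p : common3 L (lab L p 12) (lab L p 1) (lab L p 6).
Proof.
have /and3P [A B D] := lab_vertex L p 6 isT.
have E : lab L p 1 = edge_of L (pos L p) (delta L 6 + lsgn L).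
  rewrite /lab /=; apply: edge_of_eqmod; rewrite /delta /lsgn; case: (lflip L); lia.
by eexists; apply/and3P; split; [exact: D | rewrite E; exact: B | exact: A].
Qed.

Section RPsec.
Variables (L : hexlat) (C : numClosedFieldType) (P : seq (edge L)) (x y : conf L) (p : hex L).
Hypothesis Hxy : restr L (Conn L P) x = restr L (Conn L P) y.
Let Q := alpha_path L P.
Let u j := nm L x (lab L p j).
Let u' j := nm L (cxor L x Q) (lab L p j).
Let w j := nm L y (lab L p j).
Let w' j := nm L (cxor L y Q) (lab L p j).

Definition RP (F : (nat -> int) -> C) := F u' * F w = F w' * F u.

Lemma RPmul F G : RP F -> RP G -> RP (fun n => F n * G n).
Proof.
rewrite /RP => HF HG.
by rewrite mulrACA HF HG mulrACA.
Qed.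

Definition ok1 j := u' j = u j /\ w' j = w j.
Definition ok2 j := u j = w j /\ u' j = w' j.

Lemma RP3 (h : int -> int -> int -> C) j1 j2 j3 :
  (ok1 j1 /\ ok1 j2 /\ ok1 j3) \/ (ok2 j1 /\ ok2 j2 /\ ok2 j3) ->
  RP (fun n => h (n j1) (n j2) (n j3)).
Proof.
rewrite /RP /ok1 /ok2.
case=> [[[-> ->] [[-> ->] [-> ->]]] | [[-> ->] [[-> ->] [-> ->]]]].
  by rewrite mulrC.
by [].
Qed.

Lemma inPath e : Q e -> e \in P.
Proof.
rewrite /Q /alpha_path ffunE.
by apply: contraLR => /count_memPn ->.
Qed.

Lemma inConn e0 e v : incident L v e0 -> incident L v e -> e0 \in P -> e \in Conn L P.
Proof.
move=> H0 H1 HP; rewrite /Conn inE; apply/existsP; exists e0.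
rewrite HP /=; apply/orP; right; apply/existsP; exists v.
by rewrite H0 H1.
Qed.

Lemma agree e : e \in Conn L P -> x e = y e.
Proof.
move=> He.
have := congr1 (fun f : conf L => f e) Hxy.
by rewrite /restr !ffunE He.
Qed.

Lemma cond3 j1 j2 j3 : common3 L (lab L p j1) (lab L p j2) (lab L p j3) ->
  (ok1 j1 /\ ok1 j2 /\ ok1 j3) \/ (ok2 j1 /\ ok2 j2 /\ ok2 j3).
Proof.
move=> [v /and3P [I1 I2 I3]].
have K1 : forall e, Q e = false -> nm L (cxor L x Q) e = nm L x e /\ nm L (cxor L y Q) e = nm L y e.
  move=> e; rewrite /Q /alpha_path => He; rewrite /nm /cxor !ffunE.
  by move: He; rewrite ffunE => ->; rewrite !addbF.
have K2 : forall e, e \in Conn L P -> nm L x e = nm L y e /\ nm L (cxor L x Q) e = nm L (cxor L y Q) e.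
  by move=> e He; rewrite /nm /cxor !ffunE (agree _ He).
case E: [|| Q (lab L p j1), Q (lab L p j2) | Q (lab L p j3)].
  right.
  have [e0 [He0 Iv]] : exists e0, e0 \in P /\ incident L v e0.
    case/or3P: E => HQ; [exists (lab L p j1) | exists (lab L p j2) | exists (lab L p j3)].
    1-3: by split; [apply: inPath | ].
  split; [|split]; apply: K2;
    [exact: (inConn _ _ _ Iv I1 He0) | exact: (inConn _ _ _ Iv I2 He0) | exact: (inConn _ _ _ Iv I3 He0)].
left; move/negbT: E; rewrite !negb_or => /and3P [/negbTE E1 /negbTE E2 /negbTE E3].
by split; [|split]; apply: K1.
Qed.

Lemma RP_Bform : RP (Bform C).
Proof.
have c0 := cond3 _ _ _ (common_pair L p 0 isT).
have c1 := cond3 _ _ _ (common_pair L p 1 isT).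
have c2 := cond3 _ _ _ (common_pair L p 2 isT).
have c3 := cond3 _ _ _ (common_pair L p 3 isT).
have c4 := cond3 _ _ _ (common_pair L p 4 isT).
have c5 := cond3 _ _ _ (common_pair L p 5 isT).
have d7 := cond3 _ _ _ (common_outer L p 1 isT).
have d8 := cond3 _ _ _ (common_outer L p 2 isT).
have d9 := cond3 _ _ _ (common_outer L p 3 isT).
have d10 := cond3 _ _ _ (common_outer L p 4 isT).
have d11 := cond3 _ _ _ (common_outer L p 5 isT).
have d12 := cond3 _ _ _ (common_outer6 L p).
have R0 := RP3 (fun a b _ => (-1) ^ (a * (1 - b))) _ _ _ c0.
have R1 := RP3 (fun a b _ => (-1) ^ (a * (1 - b))) _ _ _ c1.
have R2 := RP3 (fun a b _ => (-1) ^ (a * (1 - b))) _ _ _ c2.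
have R3 := RP3 (fun a b _ => (-1) ^ (a * (1 - b))) _ _ _ c3.
have R4 := RP3 (fun a b _ => (-1) ^ (a * (1 - b))) _ _ _ c4.
have R5 := RP3 (fun a b _ => (-1) ^ (a * (1 - b))) _ _ _ c5.
have S12 := RP3 (fun n12 n1 n6 => 'i ^ (n12 * (n1 * n6 - (1 - n1) * (1 - n6)))) _ _ _ d12.
have S7 := RP3 (fun n7 n1 n2 => 'i ^ (n7 * ((1 - n1) * (1 - n2) - n1 * n2))) _ _ _ d7.
have S8 := RP3 (fun n8 n2 n3 => 'i ^ ((1 - n8) * (n2 * (1 - n3) - (1 - n2) * n3))) _ _ _ d8.
have S9 := RP3 (fun n9 n3 n4 => 'i ^ (n9 * (n3 * n4 - (1 - n3) * (1 - n4)))) _ _ _ d9.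
have S10 := RP3 (fun n10 n4 n5 => 'i ^ (n10 * ((1 - n4) * (1 - n5) - n4 * n5))) _ _ _ d10.
have S11 := RP3 (fun n11 n5 n6 => 'i ^ ((1 - n11) * (n5 * (1 - n6) - (1 - n5) * n6))) _ _ _ d11.
have := RPmul _ _ (RPmul _ _ (RPmul _ _ (RPmul _ _ (RPmul _ _ (RPmul _ _ (RPmul _ _ (RPmul _ _ (RPmul _ _ (RPmul _ _ (RPmul _ _ R0 R1) R2) R3) R4) R5) S12) S7) S8) S9) S10) S11.
rewrite /RP /Bform !big_ord_recr !big_ord0 /= !mul1r.
by [].
Qed.
End RPsec.


Lemma Bform_neq0 (C : numClosedFieldType) n : Bform C n != 0.
Proof.
have i0 : ('i : C) != 0 by rewrite neq0Ci.
have m0 : (-1 : C) != 0 by rewrite oppr_eq0 oner_eq0.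
rewrite /Bform !big_ord_recr !big_ord0 /= !mul1r.
by rewrite !mulf_neq0 // expfz_neq0.
Qed.

Lemma bph_neq0 L C p z : bph L C p z != 0.
Proof. by rewrite bph_Bform Bform_neq0. Qed.

Lemma ratio_local L C P p x y : restr L (Conn L P) x = restr L (Conn L P) y ->
  bph L C p (cxor L x (alpha_path L P)) / bph L C p x =
  bph L C p (cxor L y (alpha_path L P)) / bph L C p y.
Proof.
move=> Hxy.
have := @RP_Bform L C P x y p Hxy; rewrite /RP -!bph_Bform => E.
have nx := bph_neq0 L C p x; have ny := bph_neq0 L C p y.
apply/eqP; rewrite eqr_div // E; done.
Qed.

Lemma bsq L C
  (Hlat : forall m n : int, (m, n) != (0, 0) ->
     leq 3 (hexnorm (m * (La L).+1%:Z + n * (Lb L)%:Z, n * (Lc L).+1%:Z)))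
  p z : bph L C p z * bph L C p (cxor L z (alpha_plaq L p)) = 1.
Proof.
rewrite !bph_Bform; apply: Bsq.
- move=> j jl; rewrite /nm /cxor ffunE.
  have -> : alpha_plaq L p (lab L p j) = true.
    rewrite /alpha_plaq ffunE; apply/existsP.
    exists (Ordinal (ltn_pmod (delta L j) (isT : (0 < 6)%N))).
    by rewrite /lab jl /=; apply/eqP; apply: edge_of_eqmod; rewrite modn_mod.
  by case: (z _).
- move=> j jl; rewrite /nm /cxor ffunE.
  have -> : alpha_plaq L p (lab L p j) = false.
    rewrite /alpha_plaq ffunE; apply/negbTE/existsP => [[k /eqP]].
    rewrite /lab (_ : (j <= 6)%N = false); last by lia.
    by apply/eqP; apply: outer_not_boundary.
  by rewrite addbF.
- rewrite /nm /lab /=; congr ((z _ : nat)%:Z); apply: edge_of_eqmod.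
  by rewrite /delta; lia.
Qed.


Section Alg.
Variable L : hexlat.
Lemma cxorC (x y : conf L) : cxor L x y = cxor L y x.
Proof. by apply/ffunP => e; rewrite !ffunE addbC. Qed.
Lemma cxorA (x y z : conf L) : cxor L (cxor L x y) z = cxor L x (cxor L y z).
Proof. by apply/ffunP => e; rewrite !ffunE addbA. Qed.
Lemma cxorK (x y : conf L) : cxor L (cxor L x y) y = x.
Proof. by apply/ffunP => e; rewrite !ffunE -addbA addbb addbF. Qed.
Lemma cxor0l (x : conf L) : cxor L (czero L) x = x.
Proof. by apply/ffunP => e; rewrite !ffunE. Qed.
Lemma restr_cxor A (u v : conf L) : restr L A (cxor L (restr L A u) v) = restr L A (cxor L u v).
Proof. by apply/ffunP => e; rewrite !ffunE; case: (e \in A). Qed.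
Lemma restr_id A (u : conf L) : restr L A (restr L A u) = restr L A u.
Proof. by apply/ffunP => e; rewrite !ffunE andbA andbb. Qed.

Lemma alpha_plaqs_E s e : alpha_plaqs L s e = odd (count (fun q => alpha_plaq L q e) s).
Proof.
elim: s => [|q s IH]; first by rewrite /alpha_plaqs /= /czero ffunE.
have -> : alpha_plaqs L (q :: s) = cxor L (alpha_plaq L q) (alpha_plaqs L s) by [].
rewrite /cxor ffunE IH /= oddD.
by case: (alpha_plaq L q e).
Qed.

Lemma alpha_plaqs_perm s t : perm_eq s t -> alpha_plaqs L s = alpha_plaqs L t.
Proof.
move/permP => H; apply/ffunP => e; rewrite !alpha_plaqs_E.
by rewrite (H (fun q => alpha_plaq L q e)).
Qed.

Lemma alpha_plaqs_rcons s q : alpha_plaqs L (rcons s q) = cxor L (alpha_plaqs L s) (alpha_plaq L q).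
Proof.
apply/ffunP => e; rewrite ffunE !alpha_plaqs_E -cats1 count_cat /= addn0 oddD.
by case: (alpha_plaq L q e).
Qed.
End Alg.

Lemma theta_rcons L C s i ps q :
  theta L C s i (rcons ps q) = theta L C s i ps *
  (bph L C q (cxor L (cxor L i (alpha_path L s)) (alpha_plaqs L ps)) /
   bph L C q (cxor L i (alpha_plaqs L ps))).
Proof.
rewrite /theta size_rcons big_ord_recr /=; congr (_ * _).
  apply: eq_bigr => k _ /=.
  have kl : (k < size ps)%N := ltn_ord k.
  by rewrite nth_rcons kl -cats1 take_cat kl.
by rewrite nth_rcons ltnn eqxx -cats1 take_cat ltnn subnn take0 cats0.
Qed.


Theorem lemma4 (L : hexlat) (C : numClosedFieldType)
  (Hlat : forall m n : int, (m, n) != (0, 0) ->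
     leq 3 (hexnorm (m * (La L).+1%:Z + n * (Lb L)%:Z, n * (Lc L).+1%:Z)))
  (P : seq (edge L)) (HP : is_walk L P)
  (F : conf L -> C) (R : {set conf L}) (ext : conf L -> conf L)
  (HRconn : forall r, r \in R -> restr L (Conn L P) r = r)
  (HRcls : forall i, restr L (Conn L P) i = i ->
     #|[set r in R | r \in cls L P i]| = 1%N)
  (Hext : forall r, r \in R -> restr L (Conn L P) (ext r) = r)
  (HFunit : forall r, r \in R -> `|F r| = 1)
  (HFalg : forall r, r \in R -> forall ps : seq (hex L),
     uniq ps -> {subset ps <= BP L P} ->
     F (restr L (Conn L P) (cxor L r (alpha_plaqs L ps))) = theta L C P (ext r) ps * F r) :
  forall (j : conf L) (p : hex L), p \in BP L P ->
    F (restr L (Conn L P) (cxor L j (alpha_plaq L p)))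
    = bph L C p (cxor L j (alpha_path L P)) / bph L C p j * F (restr L (Conn L P) j).
Proof.
move=> j p Hp.
set Q := alpha_path L P.
set A := Conn L P.
have := HRcls (restr L A j) (restr_id _ _ _).
move/eqP/cards1P => [r Hr].
have : r \in [set r in R | r \in cls L P (restr L A j)] by rewrite Hr set11.
rewrite inE => /andP [rR /imsetP [S SB rE]].
rewrite powersetE in SB.
set aS := alpha_plaqs L (enum S).
have Hj : restr L A j = restr L A (cxor L r aS).
  by rewrite rE restr_cxor cxorK restr_id.
have Hjp : restr L A (cxor L j (alpha_plaq L p)) = restr L A (cxor L (cxor L r aS) (alpha_plaq L p)).
  by rewrite -[LHS]restr_cxor Hj restr_cxor.
have Hrx : forall v, restr L A (cxor L (ext r) v) = restr L A (cxor L r v).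
  by move=> v; rewrite -restr_cxor Hext // restr_cxor.
have ratio_eq : forall x y, restr L A x = restr L A y ->
    bph L C p (cxor L x Q) / bph L C p x = bph L C p (cxor L y Q) / bph L C p y.
  by move=> x y; apply: ratio_local.
have sub_en : {subset enum S <= BP L P}.
  by move=> q; rewrite mem_enum => /(subsetP SB).
have reorder : forall x v, cxor L (cxor L x Q) v = cxor L (cxor L x v) Q.
  by move=> x v; rewrite !cxorA (cxorC _ Q v).
case: (boolP (p \in S)) => pS.
  set ps0 := rem p (enum S).
  have u0 : uniq ps0 by rewrite rem_uniq // enum_uniq.
  have s0 : {subset ps0 <= BP L P} by move=> q /mem_rem /sub_en.
  have pe : perm_eq (rcons ps0 p) (enum S).
    rewrite perm_rcons perm_sym; apply: perm_to_rem; by rewrite mem_enum.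
  have E1 : aS = cxor L (alpha_plaqs L ps0) (alpha_plaq L p).
    by rewrite /aS -(@alpha_plaqs_perm L _ _ pe) alpha_plaqs_rcons.
  have u1 : uniq (rcons ps0 p) by rewrite (perm_uniq pe) enum_uniq.
  have s1 : {subset rcons ps0 p <= BP L P} by move=> q; rewrite (perm_mem pe) => /sub_en.
  have F1 := HFalg r rR _ u1 s1.
  have F0 := HFalg r rR _ u0 s0.
  rewrite theta_rcons alpha_plaqs_rcons -E1 -/Q in F1.
  rewrite Hj F1 Hjp cxorA E1 cxorK F0.
  set x0 := cxor L (ext r) (alpha_plaqs L ps0).
  rewrite reorder -/x0.
  have rx : restr L A x0 = restr L A (cxor L j (alpha_plaq L p)).
    by rewrite /x0 Hrx Hjp cxorA E1 cxorK.
  rewrite (ratio_eq _ _ rx).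
  set T := theta L C P (ext r) ps0.
  set b1 := bph L C p (cxor L j Q); set b0 := bph L C p j.
  set b2 := bph L C p (cxor L (cxor L j (alpha_plaq L p)) Q).
  set b3 := bph L C p (cxor L j (alpha_plaq L p)).
  have K1 : b0 * b3 = 1 by apply: bsq.
  have K2 : b1 * b2 = 1.
    by rewrite /b1 /b2 cxorA (cxorC _ (alpha_plaq L p) Q) -cxorA; apply: bsq.
  have n0 : b0 != 0 by apply: bph_neq0.
  have n3 : b3 != 0 by apply: bph_neq0.
  have -> : b1 / b0 * (T * (b2 / b3) * F r) = (b1 * b2) / (b0 * b3) * (T * F r).
    clearbody b0 b1 b2 b3 T; rewrite invfM; ring.
  by rewrite K1 K2 divr1 mul1r.
have u1 : uniq (rcons (enum S) p) by rewrite rcons_uniq mem_enum pS enum_uniq.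
have s1 : {subset rcons (enum S) p <= BP L P}.
  by move=> q; rewrite mem_rcons inE => /orP [/eqP -> //| /sub_en].
have F1 := HFalg r rR _ u1 s1.
have F0 := HFalg r rR _ (enum_uniq _) sub_en.
rewrite theta_rcons alpha_plaqs_rcons -/aS -/Q in F1.
rewrite -/aS in F0.
rewrite Hjp cxorA F1 Hj F0 reorder.
have rx : restr L A (cxor L (ext r) aS) = restr L A j by rewrite Hrx Hj.
rewrite (ratio_eq _ _ rx).
by rewrite [RHS]mulrC [LHS]mulrAC.
Qed.
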